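(* Let $p$ be a prime and $n\geq1$. Then $$I_{p^n}=\bigcap_{i=0}^{p^n-1}(p^n,X-i)=\bigcap_{j=0}^{p-1}\mathcal{Q}_{n,j}=\prod_{j=0}^{p-1}\mathcal{Q}_{n,j},$$ where each $\mathcal{Q}_{n,j}$ is $\mathcal{M}_j$-primary, and the middle expression is the minimal primary decomposition of $I_{p^n}$ (its associated primes being exactly the maximal ideals $\mathcal{M}_0,\dots,\mathcal{M}_{p-1}$).
   Context: For a prime $p$ and $n\geq1$, $I_{p^n}=p^n\mathrm{Int}(\mathbb{Z})\cap\mathbb{Z}[X]$, where $\mathrm{Int}(\mathbb{Z})=\{f\in\mathbb{Q}[X]: f(\mathbb{Z})\subseteq\mathbb{Z}\}$; equivalently $I_{p^n}=\{f\in\mathbb{Z}[X] : p^n\mid f(a)\text{ for all }a\in\mathbb{Z}\}$. For $j\in\{0,\dots,p-1\}$, $\mathcal{M}_j=(p,X-j)\subseteq\mathbb{Z}[X]$ and $\mathcal{Q}_{n,j}=\bigcap_{i\in\{0,\dots,p^n-1\},\ i\equiv j \ (\mathrm{mod}\ p)}(p^n,X-i)$, i.e. the set of $f\in\mathbb{Z}[X]$ with $p^n\mid f(i)$ for all integers $i\equiv j\pmod p$. *)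

(* Defs.v *)
From HB Require Import structures.
From mathcomp Require Import all_boot all_order all_algebra.
Set Implicit Arguments. Unset Strict Implicit. Unset Printing Implicit Defensive.
Import Order.TTheory GRing.Theory Num.Theory.
Local Open Scope ring_scope.

Definition ideal := {poly int} -> Prop.

Definition I_pn (p n : nat) : ideal :=
  fun f => forall a : int, ((p ^ n)%N%:Z %| f.[a])%Z.

Definition ideal2 (c i : int) : ideal :=
  fun f => exists g h : {poly int}, f = g * c%:P + h * ('X - i%:P).

Definition M_ (p j : nat) : ideal := ideal2 p%:Z j%:Z.

Definition Q_ (p n j : nat) : ideal :=
  fun f => forall i : nat, (i < p ^ n)%N -> (i %% p = j %% p)%N ->
    ideal2 (p ^ n)%N%:Z i%:Z f.

Definition prod_ideal (m : nat) (Q : nat -> ideal) : ideal :=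
  fun f => exists (N : nat) (a : nat -> nat -> {poly int}),
    (forall k j, (k < N)%N -> (j < m)%N -> Q j (a k j)) /\
    f = \sum_(k < N) \prod_(j < m) a k j.

Definition is_ideal (J : ideal) : Prop :=
  J 0 /\ (forall f g, J f -> J g -> J (f + g)) /\
  (forall f g, J g -> J (f * g)).

Definition radical (J : ideal) : ideal := fun f => exists k : nat, J (f ^+ k).

Definition primary (J : ideal) : Prop :=
  is_ideal J /\ ~ J 1 /\
  (forall a b, J (a * b) -> J a \/ exists k : nat, J (b ^+ k)).

Definition primary_for (M J : ideal) : Prop :=
  primary J /\ forall f, radical J f <-> M f.

Definition maximal_ideal (M : ideal) : Prop :=
  is_ideal M /\ ~ M 1 /\
  forall J : ideal, is_ideal J -> (forall f, M f -> J f) ->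
    (forall f, J f -> M f) \/ J 1.

Definition min_primary_decomp (I : ideal) (m : nat) (Q : nat -> ideal) : Prop :=
  (forall f, I f <-> forall j, (j < m)%N -> Q j f) /\
  (forall j, (j < m)%N -> primary (Q j)) /\
  (forall j k, (j < k)%N -> (k < m)%N ->
     ~ (forall f, radical (Q j) f <-> radical (Q k) f)) /\
  (forall j, (j < m)%N ->
     ~ (forall f, (forall k, (k < m)%N -> k <> j -> Q k f) -> Q j f)).

(* Main.v *)
Require Import Defs.
From HB Require Import structures.
From mathcomp Require Import all_boot all_order all_algebra all_solvable.
From mathcomp Require Import ring.
From Stdlib Require Import Classical FunctionalExtensionality PropExtensionality.
Set Implicit Arguments. Unset Strict Implicit. Unset Printing Implicit Defensive.
Import Order.TTheory GRing.Theory Num.Theory.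
Local Open Scope ring_scope.

Lemma dvdz_horner (f : {poly int}) (a b : int) : (a - b %| f.[a] - f.[b])%Z.
Proof.
elim/poly_ind: f => [|f c IH]; first by rewrite !horner0 subrr dvdz0.
rewrite !hornerE.
have -> : f.[a] * a + c - (f.[b] * b + c) = (f.[a] - f.[b]) * a + f.[b] * (a - b) by ring.
by apply: rpredD; [apply: dvdz_mulr | apply: dvdz_mull].
Qed.

Lemma red (d : nat) (a : int) : (0 < d)%N -> exists i : nat, (i < d)%N /\ (d%:Z %| a - i%:Z)%Z.
Proof.
move=> d0; exists `|(a %% d)%Z|%N.
have h0 : 0 <= (a %% d)%Z by apply: modz_ge0; rewrite eqz_nat -lt0n.
have e : (`|(a %% d)%Z|%N : int) = (a %% d)%Z by rewrite gez0_abs.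
split.
  have := ltz_pmod a (d := d%:Z); rewrite ltz_nat => /(_ d0).
  by rewrite -e ltz_nat.
rewrite e {1}(divz_eq a d) addrK; exact: dvdz_mull.
Qed.

Lemma ideal2E c i f : ideal2 c i f <-> (c %| f.[i])%Z.
Proof.
split.
  by case=> g [h ->]; rewrite !hornerE subrr mulr0 addr0; apply: dvdz_mull.
case/dvdzP=> m hm.
have : root (f - f.[i]%:P) i by rewrite /root !hornerE subrr.
case/factor_theorem=> q hq.
exists m%:P, q; rewrite -hq -polyCM -hm; ring.
Qed.

Lemma PoszX (r k : nat) : ((r ^ k)%N : int) = (r : int) ^+ k.
Proof. by rewrite -!natz natrX. Qed.

Lemma euler_int (p n : nat) (x : int) : prime p -> ~~ (p %| `|x|)%N ->
  ((p^n)%N%:Z %| x ^+ totient (p^n) - 1)%Z.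
Proof.
move=> hp hx.
case: n => [|n]; first by rewrite expn0 dvdzE dvd1n.
have d0 : (0 < p ^ n.+1)%N by rewrite expn_gt0 prime_gt0.
have [r [hr hxr]] := red x d0.
set T := totient _.
have -> : x ^+ T - 1 = (x ^+ T - (r:int) ^+ T) + ((r:int) ^+ T - 1) by ring.
apply: rpredD.
  apply: dvdz_trans hxr _.
  have := dvdz_horner ('X ^+ T) x r; by rewrite !hornerXn.
have pr : ~~ (p %| r)%N.
  apply: contra hx => pr.
  have : ((p:int) %| x - (r:int))%Z.
    apply: dvdz_trans hxr; rewrite dvdzE /=; exact: dvdn_exp.
  have : ((p:int) %| (r:int))%Z by rewrite dvdzE.
  move=> h1 h2; have := rpredD h2 h1; rewrite subrK.
  by rewrite dvdzE.
have cop : coprime r (p ^ n.+1).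
  by apply: coprimeXr; rewrite coprime_sym prime_coprime.
have := Euler_exp_totient cop; rewrite -/T => he.
rewrite -eqz_mod_dvd -PoszX -[1]/(Posz 1) !modz_nat; by rewrite he.
Qed.

Lemma cong (d : int) (f : {poly int}) a b : (d %| a - b)%Z -> (d %| f.[b])%Z -> (d %| f.[a])%Z.
Proof.
move=> h1 h2; rewrite -(subrK f.[b] f.[a]); apply: rpredD => //.
exact: dvdz_trans h1 (dvdz_horner f a b).
Qed.

Lemma p_dvd_pn (p n : nat) (x : int) : (0 < n)%N -> ((p^n)%N%:Z %| x)%Z -> ((p:int) %| x)%Z.
Proof. move=> hn; apply: dvdz_trans; rewrite dvdzE /=; exact: dvdn_exp. Qed.

Definition Qa (p n j : nat) (f : {poly int}) :=
  forall a : int, ((p:int) %| a - (j:int))%Z -> ((p^n)%N%:Z %| f.[a])%Z.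

Lemma modE (p i j : nat) : (i %% p = j %% p)%N <-> ((p:int) %| (i:int) - (j:int))%Z.
Proof.
rewrite -eqz_mod_dvd !modz_nat; split; first by move=> ->.
by move/eqP; case.
Qed.

Lemma QE p n j f : prime p -> (0 < n)%N -> Q_ p n j f <-> Qa p n j f.
Proof.
move=> hp hn; split.
  move=> hQ a ha.
  have d0 : (0 < p ^ n)%N by rewrite expn_gt0 prime_gt0.
  have [i [hi hai]] := red a d0.
  apply: (@cong _ _ _ _ hai); apply/ideal2E; apply: hQ => //.
  apply/modE.
  have -> : (i:int) - (j:int) = (a - (j:int)) - (a - (i:int)) by ring.
  by apply: rpredB => //; apply: p_dvd_pn hai.
move=> hQ i hi hij; apply/ideal2E; apply: hQ; exact/modE.
Qed.

Lemma part1 p n f : prime p -> I_pn p n f <->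
     forall i : nat, (i < p ^ n)%N -> ideal2 (p ^ n)%N%:Z i%:Z f.
Proof.
move=> hp; split; first by move=> h i _; apply/ideal2E.
move=> h a.
have d0 : (0 < p ^ n)%N by rewrite expn_gt0 prime_gt0.
have [i [hi hai]] := red a d0.
apply: (@cong _ _ _ _ hai); apply/ideal2E; exact: h.
Qed.

Lemma part2 p n f : prime p -> (0 < n)%N -> I_pn p n f <-> forall j : nat, (j < p)%N -> Qa p n j f.
Proof.
move=> hp hn; split; first by move=> h j _ a _; exact: h.
move=> h a.
have [j [hj haj]] := red a (prime_gt0 hp).
exact: (h j hj a haj).
Qed.


Lemma QEq p n j : prime p -> (0 < n)%N -> Q_ p n j = Qa p n j.
Proof.
move=> hp hn; apply: functional_extensionality => f.
apply: propositional_extensionality; exact: QE.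
Qed.

Definition Ma (p j : nat) (f : {poly int}) := ((p:int) %| f.[j%:Z])%Z.

Lemma MEq p j : M_ p j = Ma p j.
Proof.
apply: functional_extensionality => f.
apply: propositional_extensionality; exact: ideal2E.
Qed.

Lemma Qa_ideal p n j : is_ideal (Qa p n j).
Proof.
split; first by move=> a _; rewrite horner0 dvdz0.
split; first by move=> f g hf hg a ha; rewrite hornerD; apply: rpredD; [apply: hf | apply: hg].
by move=> f g hg a ha; rewrite hornerM; apply: dvdz_mull; apply: hg.
Qed.

Lemma Ma_ideal p j : is_ideal (Ma p j).
Proof.
split; first by rewrite /Ma horner0 dvdz0.
split; first by move=> f g hf hg; rewrite /Ma hornerD; apply: rpredD.
by move=> f g hg; rewrite /Ma hornerM; apply: dvdz_mull.
Qed.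

Lemma pn_Xn (p n : nat) : ((p ^ n)%N : int) = (p:int) ^+ n.
Proof. exact: PoszX. Qed.

Lemma pow_in (p n j : nat) (b : {poly int}) : ((p:int) %| b.[j%:Z])%Z -> Qa p n j (b ^+ n).
Proof.
move=> hb a ha; rewrite horner_exp pn_Xn; apply: dvdz_exp2r.
exact: (@cong _ _ _ _ ha).
Qed.

Lemma not_p_dvd (p j : nat) (b : {poly int}) (a : int) : ~~ ((p:int) %| b.[j%:Z])%Z -> ((p:int) %| a - j%:Z)%Z ->
  ~~ ((p:int) %| b.[a])%Z.
Proof.
move=> hb ha; apply: contra hb => h; apply: (@cong _ _ _ a) => //.
by rewrite -opprB rpredN.
Qed.

Lemma pn_not1 (p n : nat) : prime p -> (0 < n)%N -> ~ ((p^n)%N%:Z %| 1)%Z.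
Proof.
move=> hp; case: n => // n _; rewrite dvdz1 /= expnS muln_eq1 => /andP [/eqP h _].
by move: (prime_gt1 hp); rewrite h.
Qed.

Lemma Qa_primary p n j : prime p -> (0 < n)%N -> primary (Qa p n j).
Proof.
move=> hp hn; split; first exact: Qa_ideal.
split.
  move=> h; apply: (pn_not1 hp hn); have := h j%:Z; rewrite subrr hornerC; apply.
  exact: dvdz0.
move=> a b hab.
case: (boolP ((p:int) %| b.[j%:Z])%Z) => hb; first by right; exists n; apply: pow_in.
left=> x hx; have := hab x hx; rewrite hornerM Gauss_dvdzl //.
rewrite coprimezE /= coprimeXl // prime_coprime //.
exact: (not_p_dvd hb hx).
Qed.

Lemma Qa_radical p n j f : prime p -> (0 < n)%N -> radical (Qa p n j) f <-> Ma p j f.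
Proof.
move=> hp hn; split.
  case=> k hk; have := hk j%:Z; rewrite subrr dvdz0 => /(_ isT).
  rewrite horner_exp => /(p_dvd_pn hn); rewrite /Ma !dvdzE /= abszX Euclid_dvdX //.
  by case/andP.
by move=> h; exists n; apply: pow_in.
Qed.

Lemma Ma_not1 p j : prime p -> ~ Ma p j 1.
Proof.
move=> hp; rewrite /Ma hornerC dvdz1 /= => /eqP h.
by move: (prime_gt1 hp); rewrite h.
Qed.

Lemma Ma_maximal p j : prime p -> maximal_ideal (Ma p j).
Proof.
move=> hp; split; first exact: Ma_ideal.
split; first exact: Ma_not1.
move=> J [J0 [JD JM]] hMJ.
case: (classic (exists f, J f /\ ~ Ma p j f)) => [[f [Jf nf]]|hn]; last first.
  left=> f Jf; apply: NNPP => nf; apply: hn; by exists f.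
right.
have : root (f - f.[j%:Z]%:P) j%:Z by rewrite /root !hornerE subrr.
case/factor_theorem=> q hq.
have hX : J ('X - (j%:Z)%:P) by apply: hMJ; rewrite /Ma !hornerE subrr dvdz0.
have hc : J (f.[j%:Z]%:P).
  have -> : f.[j%:Z]%:P = f + (- q) * ('X - (j%:Z)%:P) by rewrite mulNr -hq; ring.
  by apply: JD => //; apply: JM.
have cop : coprimez p f.[j%:Z].
  by rewrite coprimezE /= prime_coprime //; apply/negP; exact: nf.
case: (Bezoutz p f.[j%:Z]) => u [v huv].
move: cop; rewrite /coprimez => /eqP cop; rewrite cop in huv.
have -> : (1 : {poly int}) = (u * p)%:P + v%:P * (f.[j%:Z])%:P by rewrite -polyCM -polyCD huv.
apply: JD; last by apply: JM.
by apply: hMJ; rewrite /Ma hornerC; apply: dvdz_mull.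
Qed.

Definition aa (p n k : nat) : {poly int} := ('X - (k%:Z)%:P) ^+ totient (p ^ n).

Lemma T_ge_n p n : prime p -> (0 < n)%N -> (n <= totient (p ^ n))%N.
Proof.
move=> hp hn; rewrite totient_pfactor //.
have h1 : (n <= p ^ n.-1)%N by rewrite -{1}(prednK hn); apply: ltn_expl; exact: prime_gt1.
apply: (leq_trans h1); apply: leq_pmull.
by rewrite -ltnS prednK ?prime_gt0 ?prime_gt1.
Qed.

Lemma aa_in p n k : prime p -> (0 < n)%N -> Qa p n k (aa p n k).
Proof.
move=> hp hn a ha; rewrite /aa horner_exp hornerXsubC pn_Xn.
apply: (dvdz_trans (dvdz_exp2r n ha)); apply: dvdz_exp2l; exact: T_ge_n.
Qed.

Lemma aa_one p n k (a : int) : prime p -> ~~ ((p:int) %| a - k%:Z)%Z ->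
  ((p^n)%N%:Z %| (aa p n k).[a] - 1)%Z.
Proof.
move=> hp h; rewrite /aa horner_exp hornerXsubC; apply: euler_int => //.
Qed.

Lemma distinct_mod (p j k : nat) : (j < p)%N -> (k < p)%N -> j <> k -> ~~ ((p:int) %| j%:Z - k%:Z)%Z.
Proof.
move=> hj hk hjk; apply/negP => /modE; rewrite !modn_small //.
Qed.

Definition ee (p n j : nat) : {poly int} := \prod_(k < p | (k:nat) != j) aa p n k.

Lemma ee_in p n j r : prime p -> (0 < n)%N -> (r < p)%N -> r <> j -> Qa p n r (ee p n j).
Proof.
move=> hp hn hr hrj; rewrite /ee (bigD1 (Ordinal hr)) /=; last by apply/eqP.
rewrite mulrC; apply: (proj2 (proj2 (Qa_ideal p n r))); exact: aa_in.
Qed.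

Lemma ee_one p n j a : prime p -> (j < p)%N -> ((p:int) %| a - j%:Z)%Z ->
  ((p^n)%N%:Z %| (ee p n j).[a] - 1)%Z.
Proof.
move=> hp hj ha; rewrite /ee horner_prod.
apply: (big_ind (fun x => ((p^n)%N%:Z %| x - 1)%Z)).
- by rewrite subrr dvdz0.
- move=> x y hx hy.
  have -> : x * y - 1 = (x - 1) * y + (y - 1) by ring.
  by apply: rpredD => //; apply: dvdz_mulr.
move=> k hk; apply: aa_one => //; apply/negP => hak.
have : ((p:int) %| j%:Z - k%:Z)%Z.
  have -> : j%:Z - k%:Z = (a - k%:Z) - (a - j%:Z) by ring.
  exact: rpredB.
apply/negP; apply: distinct_mod => //.
by move=> e; move: hk; rewrite e eqxx.
Qed.

Lemma ee_notin p n j : prime p -> (0 < n)%N -> (j < p)%N -> ~ Qa p n j (ee p n j).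
Proof.
move=> hp hn hj h; apply: (pn_not1 hp hn).
have h2 : ((p:int) %| j%:Z - j%:Z)%Z by rewrite subrr dvdz0.
have h1 := ee_one n hp hj h2.
have := rpredB (h j%:Z h2) h1; by rewrite opprB addrC subrK.
Qed.

Definition ss p n : {poly int} := \sum_(j < p) ee p n j.
Definition gg p n : {poly int} := 1 - ss p n.
Definition hh p n : {poly int} := \sum_(i < p) 1 ^+ (p.-1 - i) * gg p n ^+ i.

Lemma gg_in p n r : prime p -> (0 < n)%N -> (r < p)%N -> Qa p n r (gg p n).
Proof.
move=> hp hn hr a ha.
rewrite /gg /ss (bigD1 (Ordinal hr)) //= opprD addrA hornerD hornerN.
apply: rpredB.
  rewrite hornerD hornerN hornerC -opprB rpredN; exact: ee_one.
rewrite horner_sum; apply: (big_ind (fun x => ((p^n)%N%:Z %| x)%Z)).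
- exact: dvdz0.
- by move=> x y; apply: rpredD.
move=> i hi; apply: (ee_in hp hn hr) => //.
move=> e; move: hi; apply/negP; rewrite negbK; apply/eqP; apply: val_inj => /=.
by rewrite e.
Qed.

Lemma key p n : hh p n * ss p n + gg p n ^+ p = 1.
Proof.
have := subrXX 1 (gg p n) p; rewrite expr1n -/(hh p n).
have -> : 1 - gg p n = ss p n by rewrite /gg opprB addrC subrK.
move=> e; rewrite mulrC -e; ring.
Qed.

Lemma prod_in p n (N : nat) (a : nat -> nat -> {poly int}) r :
  (r < p)%N -> (forall k j, (k < N)%N -> (j < p)%N -> Qa p n j (a k j)) ->
  Qa p n r (\sum_(k < N) \prod_(j < p) a k j).
Proof.
move=> hr ha.
have [I0 [ID IM]] := Qa_ideal p n r.
apply: (big_ind (Qa p n r)) => // k _.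
rewrite (bigD1 (Ordinal hr)) //= mulrC; apply: IM; apply: ha => //.
Qed.

Lemma part3 p n f : prime p -> (0 < n)%N ->
  (forall j, (j < p)%N -> Qa p n j f) <-> prod_ideal p (Qa p n) f.
Proof.
move=> hp hn; split; last first.
  case=> N [a [ha ->]] r hr; exact: prod_in.
move=> hf.
pose a k j := if (k < p)%N then (if j == k then hh p n * f else aa p n j)
               else (if j == 0%N then gg p n * f else gg p n).
exists p.+1, a; split.
  move=> k j hk hj; have [I0 [ID IM]] := Qa_ideal p n j.
  rewrite /a; case: ifP => hkp.
    case: eqP => _; [apply: IM; exact: hf | exact: aa_in].
  case: eqP => _; [apply: IM; exact: hf | exact: gg_in].
rewrite big_ord_recr /=.
have e1 : forall k : 'I_p, \prod_(j < p) a k j = hh p n * f * ee p n k.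
  move=> k; rewrite (bigD1 k) //= /a ltn_ord eqxx /ee; congr (_ * _).
  apply: eq_big => i; first by rewrite val_eqE.
by move=> h; rewrite ifF //; apply: negbTE; exact: h.
under eq_bigr do rewrite e1.
rewrite -mulr_sumr -/(ss p n).
have p0 : (0 < p)%N by exact: prime_gt0.
rewrite (bigD1 (Ordinal p0)) //= /a ltnn eqxx.
rewrite (eq_bigr (fun _ => gg p n)); last first.
  by move=> i hi; rewrite ifF //; apply: negbTE; exact: hi.
rewrite prodr_const.
have -> : #|[pred i : 'I_p | true && (i != Ordinal p0)]| = p.-1.
  by have := cardC1 (Ordinal p0); rewrite card_ord => <-; apply: eq_card => i.
rewrite -{1}(mulr1 f) -(key p n).
have -> : gg p n ^+ p = gg p n * gg p n ^+ p.-1 by rewrite -exprS prednK.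
ring.
Qed.


Lemma QEq' p n : prime p -> (0 < n)%N -> Q_ p n = Qa p n.
Proof.
move=> hp hn; apply: functional_extensionality => j; exact: QEq.
Qed.

Lemma MEq' p : M_ p = Ma p.
Proof. apply: functional_extensionality => j; exact: MEq. Qed.

Theorem mainTheorem8 (p n : nat) (hp : prime p) (hn : (0 < n)%N) :
  (forall f, I_pn p n f <->
     forall i : nat, (i < p ^ n)%N -> ideal2 (p ^ n)%N%:Z i%:Z f) /\
  (forall f, I_pn p n f <-> forall j : nat, (j < p)%N -> Q_ p n j f) /\
  (forall f, I_pn p n f <-> prod_ideal p (Q_ p n) f) /\
  (forall j : nat, (j < p)%N -> primary_for (M_ p j) (Q_ p n j)) /\
  (forall j : nat, (j < p)%N -> maximal_ideal (M_ p j)) /\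
  min_primary_decomp (I_pn p n) p (Q_ p n).
Proof.
rewrite (QEq' hp hn) MEq'.
split; first by move=> f; exact: part1.
split; first by move=> f; exact: part2.
split; first by move=> f; rewrite (part2 _ hp hn); exact: part3.
split; first by move=> j hj; split; [exact: Qa_primary | move=> f; exact: Qa_radical].
split; first by move=> j hj; exact: Ma_maximal.
split; first by move=> f; exact: part2.
split; first by move=> j hj; exact: Qa_primary.
split.
  move=> j k hjk hk h.
  have hj : (j < p)%N by apply: ltn_trans hk.
  have := h ('X - (j%:Z)%:P); rewrite !Qa_radical // => -[h1 _].
  have : Ma p k ('X - (j%:Z)%:P) by apply: h1; rewrite /Ma !hornerE subrr dvdz0.
  rewrite /Ma !hornerE; apply/negP; apply: distinct_mod => //.
  by move=> e; move: hjk; rewrite e ltnn.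
move=> j hj h; apply: (ee_notin hp hn hj); apply: h => k hk hkj.
exact: ee_in.
Qed.
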